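(* Let $m\ge 2$ and let $\mathcal{H}$ be the incidence structure produced by the Construction described in the context (from a projective plane $\mathcal{P}$ of order $m$, affine planes $\mathcal{A}_P$ of order $m$ for each point $P$ of $\mathcal{P}$, orthogonal arrays $\mathcal{O}_l=OA(2,m+1,m)$ for each line $l$ of $\mathcal{P}$, and admissible choices $\pi$ and $\beta$). Then $\mathcal{H}$ is a $2$-uniform $(m,m)$PH-plane.
   Context: An orthogonal array $OA(2,k,v)$ is a $v^2\times k$ array with entries from a $v$-element symbol set such that in any two columns every ordered pair of symbols occurs in exactly one row. A projective plane of order $m$ has $m+1$ points on each line and $m+1$ lines through each point; an affine plane of order $m$ has $m^2$ points, $m$ points per line, and its lines split into $m+1$ parallel classes, each consisting of $m$ pairwise disjoint lines covering all points. Construction (Algorithm 1). Let $\mathcal{P}$ be a projective plane of order $m$. For each point $P$ of $\mathcal{P}$ let $\mathcal{A}_P$ be an affine plane of order $m$ (not necessarily all the same). For each line $l$ of $\mathcal{P}$ let $\mathcal{O}_l$ be an $OA(2,m+1,m)$ on a symbol set $\Sigma_l$ whose $m+1$ columns are labelled bijectively by the $m+1$ points of $l$. For each incident pair $P\in l$ choose a parallel class $\pi(P,l)$ of $\mathcal{A}_P$ such that, for each fixed $P$, the map $l\mapsto\pi(P,l)$ is a bijection from the $m+1$ lines of $\mathcal{P}$ through $P$ to the $m+1$ parallel classes of $\mathcal{A}_P$; and choose a bijection $\beta_{P,l}$ from $\Sigma_l$ to the $m$ lines of $\pi(P,l)$. The points of $\mathcal{H}$ are the pairs $(P,x)$ with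 $P$ a point of $\mathcal{P}$ and $x$ a point of $\mathcal{A}_P$. For each line $l$ of $\mathcal{P}$ and each row $r$ of $\mathcal{O}_l$, $\mathcal{H}$ has the line $\bigcup_{P\in l}\{(P,x): x\in \beta_{P,l}(\mathcal{O}_l(r,P))\}$, where $\mathcal{O}_l(r,P)$ is the entry of $\mathcal{O}_l$ in row $r$ and the column labelled $P$. Incidence is membership. Projective Hjelmslev plane: an incidence structure $\mathcal{H}$ such that (1) any two points are incident with at least one line; (2) any two lines meet in at least one point; (3) two lines meeting in more than one point are called neighbours; (4) two points incident with more than one common line are called neighbours; (5) there is an incidence-preserving surjection $\phi$ from $\mathcal{H}$ onto an ordinary projective plane with $\phi(P)=\phi(Q)\iff P\sim Q$ for points and $\phi(g)=\phi(h)\iff g\sim h$ for lines (where $\sim$ is the neighbour relation, reflexively extended; it is an equivalence relation). A $(t,r)$PH-plane is a projective Hjelmslev plane in which each line has $t(r+1)$ points and, for each point $P$ on a line $g$, exactly $t$ points of $g$ are neighbours of $P$ (including $P$); then the image projective plane has order $r$. Affine Hjelmslev plane: an incidence structure such that any two points are incident with at least one line, lines meeting in more than one point are neighbours, and there is an incidence-preserving surjection $\phi$ onto an ordinary affine plane with $\phi(P)=\phi(Q)\iff P\sim Q$, $\phi(g)=\phi(h)\iff g\sim h$, and lines with no common point mapped to parallel lines. Uniformity: a $1$-uniform projective (resp. affine) Hjelmslev plane is an ordinary projective (resp. affine) plane. For a point $P$, the point-neighbourhood restriction $\bar P$ is the incidence structure whose points are the points $Q\sim P$ and whose lines are the nonempty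 sets $g\cap\bar P$ for lines $g$ of $\mathcal{H}$. A projective (resp. affine) Hjelmslev plane is $n$-uniform if for every point $P$, $\bar P$ is an $(n-1)$-uniform affine Hjelmslev plane, and every line of $\bar P$ is the restriction of the same number of lines of $\mathcal{H}$. *)

(* Defs.v *)
From HB Require Import structures.
From mathcomp Require Import all_boot.
Set Implicit Arguments. Unset Strict Implicit. Unset Printing Implicit Defensive.

Definition proj_plane (T U : finType) (inc : T -> U -> bool) : Prop :=
  [/\ forall P Q : T, P != Q -> #|[set l | inc P l && inc Q l]| = 1,
      forall l g : U, l != g -> #|[set P | inc P l && inc P g]| = 1 &
      exists P1 P2 P3 P4 : T,
        uniq [:: P1; P2; P3; P4] /\
        forall l : U, count (fun P => inc P l) [:: P1; P2; P3; P4] <= 2].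

Definition proj_plane_order (m : nat) (T U : finType) (inc : T -> U -> bool) : Prop :=
  [/\ proj_plane inc,
      forall l : U, #|[set P | inc P l]| = m.+1 &
      forall P : T, #|[set l | inc P l]| = m.+1].

Definition aff_plane (X : finType) (D : {set X}) (Ls : {set {set X}}) : Prop :=
  [/\ forall L, L \in Ls -> L \subset D,
      forall x y, x \in D -> y \in D -> x != y ->
        #|[set L in Ls | (x \in L) && (y \in L)]| = 1,
      forall L x, L \in Ls -> x \in D -> x \notin L ->
        #|[set M in Ls | (x \in M) && [disjoint L & M]]| = 1 &
      exists x y z, [/\ x \in D, y \in D, z \in D &
        forall L, L \in Ls -> ~~ [&& x \in L, y \in L & z \in L]]].

Definition aff_plane_order (m : nat) (X : finType) (Ls : {set {set X}}) : Prop :=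
  [/\ aff_plane [set: X] Ls, #|X| = m ^ 2 & forall L, L \in Ls -> #|L| = m].

Definition par_classes (X : finType) (Ls : {set {set X}}) : {set {set {set X}}} :=
  [set [set M in Ls | (L == M) || [disjoint L & M]] | L in Ls].

Definition pt_nb (X : finType) (HL : {set {set X}}) (x y : X) : bool :=
  (x == y) || (1 < #|[set g in HL | (x \in g) && (y \in g)]|).

Definition ln_nb (X : finType) (g h : {set X}) : bool :=
  (g == h) || (1 < #|g :&: h|).

Definition proj_hjelmslev (X : finType) (HL : {set {set X}}) : Prop :=
  [/\ (forall x y : X, exists2 g : {set X}, g \in HL & (x \in g) && (y \in g)),
      (forall g h, g \in HL -> h \in HL -> exists x, x \in g :&: h) &
      exists (T U : finType) (inc : T -> U -> bool) (phip : X -> T) (phil : {set X} -> U),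
        proj_plane inc /\
        [/\ (forall x g, g \in HL -> x \in g -> inc (phip x) (phil g)),
            (forall t : T, exists x, phip x = t),
            (forall u : U, exists2 g : {set X}, g \in HL & phil g = u),
            (forall x y, phip x = phip y <-> pt_nb HL x y) &
            (forall g h, g \in HL -> h \in HL -> (phil g = phil h <-> ln_nb g h))]].

Definition tr_PH_plane (t r : nat) (X : finType) (HL : {set {set X}}) : Prop :=
  [/\ proj_hjelmslev HL,
      forall g, g \in HL -> #|g| = t * r.+1 &
      forall g x, g \in HL -> x \in g -> #|[set y in g | pt_nb HL x y]| = t].

Definition nbhd (X : finType) (HL : {set {set X}}) (x : X) : {set X} :=
  [set y | pt_nb HL x y].
Definition nbhd_lines (X : finType) (HL : {set {set X}}) (x : X) : {set {set X}} :=
  [set g :&: nbhd HL x | g in HL & g :&: nbhd HL x != set0].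

(* 2-uniform projective Hjelmslev plane: each neighbourhood restriction is a
   1-uniform affine Hjelmslev plane, i.e. an ordinary affine plane, and every
   line of it is the restriction of the same number of lines of H. *)
Definition two_uniform_PH (X : finType) (HL : {set {set X}}) : Prop :=
  proj_hjelmslev HL /\
  forall x : X,
    aff_plane (nbhd HL x) (nbhd_lines HL x) /\
    exists k, forall b, b \in nbhd_lines HL x ->
      #|[set g in HL | g :&: nbhd HL x == b]| = k.

Definition Hline (m : nat) (Pt Ln : finType) (pinc : Pt -> Ln -> bool)
  (AP : Pt -> finType) (Sym : Ln -> finType)
  (O : forall l : Ln, 'I_(m ^ 2) -> Pt -> Sym l)
  (beta : forall (P : Pt) (l : Ln), Sym l -> {set AP P})
  (l : Ln) (r : 'I_(m ^ 2)) : {set {P : Pt & AP P}} :=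
  [set x | pinc (tag x) l && (tagged x \in beta (tag x) l (O l r (tag x)))].

Definition Hlines (m : nat) (Pt Ln : finType) (pinc : Pt -> Ln -> bool)
  (AP : Pt -> finType) (Sym : Ln -> finType)
  (O : forall l : Ln, 'I_(m ^ 2) -> Pt -> Sym l)
  (beta : forall (P : Pt) (l : Ln), Sym l -> {set AP P}) : {set {set {P : Pt & AP P}}} :=
  [set Hline pinc O beta lr.1 lr.2 | lr : Ln * 'I_(m ^ 2)].

(* Main.v *)
Require Import Defs.
From HB Require Import structures.
From mathcomp Require Import all_boot zify.
Set Implicit Arguments. Unset Strict Implicit. Unset Printing Implicit Defensive.

Lemma disjP (T : finType) (A B : {set T}) :
  reflect (forall x, x \in A -> x \in B -> False) [disjoint A & B].
Proof.
rewrite disjoint_subset; apply: (iffP subsetP) => H x.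
  by move=> /H; rewrite inE => /negP.
by move=> xA; rewrite inE; apply/negP; exact: H.
Qed.

Section Aff.
Variables (m : nat) (X : finType) (Ls : {set {set X}}).
Hypothesis hA : aff_plane_order m Ls.
Hypothesis hm : 1 < m.

Definition par (L M : {set X}) := (L == M) || [disjoint L & M].

Lemma two_pts_line x y : x != y -> exists2 L, L \in Ls & (x \in L) && (y \in L).
Proof.
case: hA => [[_ h2 _ _] _ _] xy.
have := h2 x y (in_setT _) (in_setT _) xy.
move=> /eqP; rewrite eqn_leq => /andP[_]; rewrite card_gt0 => /set0Pn[L].
by rewrite inE => /andP[LL xyL]; exists L.
Qed.

Lemma line_uniq L M x y : L \in Ls -> M \in Ls -> x != y ->
  x \in L -> y \in L -> x \in M -> y \in M -> L = M.
Proof.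
case: hA => [[_ h2 _ _] _ _] LL ML xy xL yL xM yM.
have /eqP/cards1P[N hN] := h2 x y (in_setT _) (in_setT _) xy.
have : L \in [set N] by rewrite -hN inE LL xL yL.
have : M \in [set N] by rewrite -hN inE ML xM yM.
by rewrite !inE => /eqP-> /eqP->.
Qed.

Lemma line_card L : L \in Ls -> #|L| = m.
Proof. by case: hA => _ _; apply. Qed.

Lemma line_n0 L : L \in Ls -> exists x, x \in L.
Proof. move=> /line_card hL; apply/card_gt0P; rewrite hL; exact: ltnW. Qed.

Lemma other_pt (x : X) : exists y, y != x.
Proof.
case: hA => _ hX _.
have : 1 < #|[set: X]|.
  rewrite cardsT hX; apply: (leq_trans hm); rewrite -{1}(expn1 m).
  by apply: leq_pexp2l => //; exact: ltnW.
case/card_gt1P => a [b [_ _ ab]].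
case: (eqVneq a x) => [ax|ax]; last by exists a.
by exists b; rewrite -ax eq_sym.
Qed.

Lemma pt_line (x : X) : exists2 L, L \in Ls & x \in L.
Proof.
have [y yx] := other_pt x.
have [L LL /andP[_ xL]] := two_pts_line yx.
by exists L.
Qed.

Lemma par_unique x L M1 M2 : L \in Ls -> M1 \in Ls -> M2 \in Ls -> x \notin L ->
  x \in M1 -> x \in M2 -> [disjoint L & M1] -> [disjoint L & M2] -> M1 = M2.
Proof.
case: hA => [[_ _ h3 _] _ _] LL M1L M2L xL xM1 xM2 d1 d2.
have /eqP/cards1P[N hN] := h3 L x LL (in_setT _) xL.
have : M1 \in [set N] by rewrite -hN inE M1L xM1 d1.
have : M2 \in [set N] by rewrite -hN inE M2L xM2 d2.
by rewrite !inE => /eqP-> /eqP->.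
Qed.

Lemma par_sym L M : par L M = par M L.
Proof. by rewrite /par eq_sym disjoint_sym. Qed.

Lemma par_trans L M N : L \in Ls -> M \in Ls -> N \in Ls ->
  par L M -> par M N -> par L N.
Proof.
move=> LL ML NL; rewrite /par.
case/orP=> [/eqP->//|dLM]; case/orP=> [/eqP<-|dMN]; first by rewrite dLM orbT.
case: (eqVneq L N) => //= LN.
apply/disjP => x xL xN.
have xM : x \notin M by apply/negP => xM; move/disjP: dLM => /(_ x xL xM).
move/eqP: LN; apply.
by apply: (par_unique ML LL NL xM xL xN) => //; rewrite disjoint_sym.
Qed.

Definition cls (L : {set X}) := [set M in Ls | par L M].

Lemma class_of S M : S \in par_classes Ls -> M \in S -> M \in Ls /\ S = cls M.
Proof.
case/imsetP => L0 L0L ->; rewrite inE => /andP[ML pL0M]; split => //.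
apply/setP => N; rewrite !inE; case NL: (N \in Ls) => //=.
apply/idP/idP => h.
  by apply: par_trans (h) => //; rewrite par_sym.
exact: par_trans pL0M h.
Qed.

Lemma cls_in M : M \in Ls -> cls M \in par_classes Ls.
Proof. by move=> ML; apply/imsetP; exists M. Qed.

Lemma class_eq S1 S2 M : S1 \in par_classes Ls -> S2 \in par_classes Ls ->
  M \in S1 -> M \in S2 -> S1 = S2.
Proof.
by move=> h1 h2 m1 m2; case: (class_of h1 m1) => _ ->; case: (class_of h2 m2) => _ ->.
Qed.

Lemma class_cover S (x : X) : S \in par_classes Ls -> exists2 M, M \in S & x \in M.
Proof.
case/imsetP => L0 L0L ->.
case xL0 : (x \in L0); first by exists L0 => //; rewrite inE L0L /par eqxx.
case: hA => [[_ _ h3 _] _ _].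
have := h3 L0 x L0L (in_setT _) (negbT xL0).
move=> /eqP; rewrite eqn_leq => /andP[_]; rewrite card_gt0 => /set0Pn[M].
by rewrite !inE => /andP[ML /andP[xM d]]; exists M => //; rewrite inE ML /par d orbT.
Qed.

Lemma class_disj S M1 M2 x : S \in par_classes Ls -> M1 \in S -> M2 \in S ->
  x \in M1 -> x \in M2 -> M1 = M2.
Proof.
move=> hS m1 m2 x1 x2; case: (class_of hS m1) => _ e.
move: m2; rewrite e inE => /andP[_ /orP[/eqP//|/disjP d]].
by case: (d x).
Qed.

Lemma class_meet1 S1 S2 M1 M2 : S1 \in par_classes Ls -> S2 \in par_classes Ls ->
  S1 != S2 -> M1 \in S1 -> M2 \in S2 -> exists z, M1 :&: M2 = [set z].
Proof.
move=> h1 h2 ne m1 m2.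
case: (class_of h1 m1) => M1L e1; case: (class_of h2 m2) => M2L e2.
have nd : ~~ par M1 M2.
  apply/negP => p; case/negP: ne; apply/eqP; apply: (class_eq h1 h2 (M:=M2)) => //.
  by rewrite e1 inE M2L.
move: nd; rewrite /par negb_or => /andP[ne12 nd].
have [z /setIP[z1 z2]] : exists z, z \in M1 :&: M2.
  apply/set0Pn; apply/negP => /eqP e; case/negP: nd.
  apply/disjP => y y1 y2; have : y \in M1 :&: M2 by rewrite inE y1 y2.
  by rewrite e inE.
exists z; apply/setP => w; rewrite !inE.
apply/andP/eqP => [[w1 w2]|->]; last by [].
apply/eqP; apply/negPn/negP => wz; case/negP: ne12; apply/eqP.
exact: (line_uniq (x:=w) (y:=z)).
Qed.

End Aff.

Lemma card_set_sum (T : finType) (p : pred T) :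
  #|[set x | p x]| = \sum_x (p x : nat).
Proof.
rewrite -sum1_card (eq_bigl p); last by move=> x; rewrite inE.
by rewrite big_mkcond; apply: eq_bigr => x _; case: (p x).
Qed.

Lemma card_setin_sum (T : finType) (A : {pred T}) (p : pred T) :
  #|[set x in A | p x]| = \sum_(x in A) (p x : nat).
Proof.
rewrite -sum1_card (eq_bigl (fun x => (x \in A) && p x)); last by move=> x; rewrite inE.
by rewrite big_mkcondr; apply: eq_bigr => x _; case: (p x).
Qed.

Lemma card_fib (T U : finType) (A : {set T}) (f : T -> U) :
  #|A| = \sum_(u : U) #|[set x in A | f x == u]|.
Proof.
rewrite -sum1_card (partition_big f xpredT) //=; apply: eq_bigr => u _.
by rewrite -sum1_card; apply: eq_bigl => x; rewrite inE.
Qed.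

Section OA.
Variables (m : nat) (Pt S R : finType) (O : R -> Pt -> S) (C : {set Pt}).
Hypothesis hm : 0 < m.
Hypothesis hS : #|S| = m.
Hypothesis hC : #|C| = m.+1.
Hypothesis hR : #|R| = m ^ 2.
Hypothesis hO : forall P Q, P \in C -> Q \in C -> P != Q -> forall a b : S,
     #|[set r | (O r P == a) && (O r Q == b)]| = 1.

Lemma C_other P : exists2 Q, Q \in C & Q != P.
Proof.
have : 1 < #|C| by rewrite hC ltnS.
case/card_gt1P => a [b [aC bC ab]].
case: (eqVneq a P) => [aP|aP]; last by exists a.
by exists b; rewrite // -aP eq_sym.
Qed.

Lemma oa_exists P Q a b : P \in C -> Q \in C -> P != Q ->
  exists r, O r P = a /\ O r Q = b.
Proof.
move=> PC QC PQ; have := hO PC QC PQ a b.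
move/eqP/cards1P => [r hr]; exists r.
have : r \in [set r | (O r P == a) && (O r Q == b)] by rewrite hr inE.
by rewrite inE => /andP[/eqP-> /eqP->].
Qed.

Lemma oa_uniq r s P Q : P \in C -> Q \in C -> P != Q ->
  O r P = O s P -> O r Q = O s Q -> r = s.
Proof.
move=> PC QC PQ e1 e2; have := hO PC QC PQ (O s P) (O s Q).
move/eqP/cards1P => [t ht].
have : r \in [set r | (O r P == O s P) && (O r Q == O s Q)] by rewrite inE e1 e2 !eqxx.
have : s \in [set r | (O r P == O s P) && (O r Q == O s Q)] by rewrite inE !eqxx.
by rewrite ht !inE => /eqP-> /eqP->.
Qed.

Lemma oa_col P a : P \in C -> #|[set r | O r P == a]| = m.
Proof.
move=> PC; have [Q QC QP] := C_other P.
rewrite (card_fib _ (fun r => O r Q)).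
transitivity (\sum_(b : S) 1); last by rewrite sum1_card cardT -cardE hS.
apply: eq_bigr => b _; rewrite -(hO PC QC _ a b); last by rewrite eq_sym.
by apply: eq_card => r; rewrite !inE.
Qed.

Lemma oa_meet r s : exists2 P, P \in C & O r P = O s P.
Proof.
case: (eqVneq r s) => [->|rs].
  have : 0 < #|C| by rewrite hC.
  by case/card_gt0P => P PC; exists P.
case: (boolP [exists P in C, O r P == O s P]) => [/exists_inP [P PC /eqP e]|]; first by exists P.
rewrite negb_exists_in => /forall_inP hn; exfalso.
pose c t := \sum_(P in C) (O t P == O r P : nat).
have T1 : \sum_t c t = m.+1 * m.
  rewrite /c exchange_big /=.
  transitivity (\sum_(P in C) m); last by rewrite sum_nat_const hC.
  apply: eq_bigr => P PC; rewrite -(oa_col (O r P) PC) card_set_sum.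
  by apply: eq_bigr.
have T2 : \sum_(t : R) 1 = m ^ 2 by rewrite sum1_card -hR.
have cr : c r = m.+1.
  by rewrite /c (eq_bigr (fun _ => 1)) ?sum1_card // => P _; rewrite eqxx.
have cs : c s = 0 by apply: big1 => P PC; have := hn P PC; rewrite eq_sym => /negPf->.
have cle : forall t, t != r -> c t <= 1.
  move=> t tr; rewrite /c -card_setin_sum; apply/card_le1P => P1.
  rewrite inE => /andP[P1C /eqP e1] P2; rewrite !inE.
  apply/idP/idP => [/andP[P2C /eqP e2]|/eqP->]; last by rewrite P1C e1 eqxx.
  apply/negPn/negP => P21; case/negP: tr; apply/eqP.
  exact: (oa_uniq P2C P1C P21).
have E1 : c r + (c s + \sum_(t | (t != r) && (t != s)) c t) = m.+1 * m.
  by rewrite -T1 [RHS](bigD1 r) //= [X in _ = _ + X](bigD1 s) //= eq_sym.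
have E2 : 1 + (1 + \sum_(t | (t != r) && (t != s)) 1) = m ^ 2.
  by rewrite -T2 [RHS](bigD1 r) //= [X in _ = _ + X](bigD1 s) //= eq_sym.
have h : \sum_(t | (t != r) && (t != s)) c t <= \sum_(t | (t != r) && (t != s)) 1.
  by apply: leq_sum => t /andP[tr _]; exact: cle.
rewrite cr cs in E1; nia.
Qed.

End OA.

Lemma aff_transfer (Y X : finType) (f : Y -> X) (Ls : {set {set Y}}) :
  injective f -> aff_plane [set: Y] Ls ->
  aff_plane (f @: [set: Y]) [set f @: (L : {set Y}) | L in Ls].
Proof.
move=> finj [h1 h2 h3 [x [y [z [_ _ _ h4]]]]].
have fI := imset_inj finj.
split.
- by move=> L' /imsetP[L LL ->]; apply: imsetS; exact: subsetT.
- move=> x' y' /imsetP[a _ ->] /imsetP[b _ ->]; rewrite (inj_eq finj) => ab.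
  rewrite -(h2 a b (in_setT _) (in_setT _) ab) -(card_imset _ fI).
  apply: eq_card => L'; rewrite inE; apply/andP/imsetP.
    case=> /imsetP[L LL ->]; rewrite !mem_imset // => abL.
    by exists L => //; rewrite inE LL.
  case=> L; rewrite inE => /andP[LL abL] ->; split; first exact: imset_f.
  by rewrite !mem_imset.
- move=> L' x' /imsetP[L LL ->] /imsetP[a _ ->]; rewrite mem_imset // => aL.
  rewrite -(h3 L a LL (in_setT _) aL) -(card_imset _ fI).
  apply: eq_card => M'; rewrite inE; apply/andP/imsetP.
    case=> /imsetP[M ML ->]; rewrite mem_imset // imset_disjoint // => abL.
    by exists M => //; rewrite inE ML.
  case=> M; rewrite inE => /andP[ML abL] ->; split; first exact: imset_f.
  by rewrite mem_imset // imset_disjoint.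
- exists (f x), (f y), (f z); split; try exact: imset_f; try exact: in_setT.
  by move=> L' /imsetP[L LL ->]; rewrite !mem_imset //; exact: h4.
Qed.

Unset Implicit Arguments.
Section Main.
Variables (m : nat) (Pt Ln : finType) (pinc : Pt -> Ln -> bool)
  (AP : Pt -> finType) (AL : forall P : Pt, {set {set AP P}})
  (Sym : Ln -> finType) (O : forall l : Ln, 'I_(m ^ 2) -> Pt -> Sym l)
  (pi : forall P : Pt, Ln -> {set {set AP P}})
  (beta : forall (P : Pt) (l : Ln), Sym l -> {set AP P}).
Hypothesis hm : 1 < m.
Hypothesis hP : proj_plane_order m pinc.
Hypothesis hA : forall P, aff_plane_order m (AL P).
Hypothesis hS : forall l, #|Sym l| = m.
Hypothesis hO : forall l P Q, pinc P l -> pinc Q l -> P != Q -> forall a b : Sym l,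
     #|[set r | (O l r P == a) && (O l r Q == b)]| = 1.
Hypothesis hpi1 : forall P l, pinc P l -> pi P l \in par_classes (AL P).
Hypothesis hpi2 : forall P l1 l2, pinc P l1 -> pinc P l2 -> pi P l1 = pi P l2 -> l1 = l2.
Hypothesis hpi3 : forall P S, S \in par_classes (AL P) -> exists2 l, pinc P l & pi P l = S.
Hypothesis hb1 : forall P l, pinc P l -> injective (beta P l).
Hypothesis hb2 : forall P l a, pinc P l -> beta P l a \in pi P l.
Hypothesis hb3 : forall P l L, pinc P l -> L \in pi P l -> exists a, beta P l a = L.

Set Implicit Arguments.
Local Notation X := {P : Pt & AP P}.
Local Notation HL := (Hlines pinc O beta).
Local Notation Hl := (Hline pinc O beta).
Local Notation T P := (@Tagged Pt P AP).

Definition C l := [set P | pinc P l].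

Lemma hm0 : 0 < m. Proof. exact: ltnW. Qed.

Lemma hC l : #|C l| = m.+1.
Proof. by case: hP => _ h _; rewrite h. Qed.

Arguments hC : clear implicits.
Lemma hR : #|'I_(m ^ 2)| = m ^ 2. Proof. exact: card_ord. Qed.

Lemma hO' l : forall P Q, P \in C l -> Q \in C l -> P != Q -> forall a b : Sym l,
     #|[set r | (O l r P == a) && (O l r Q == b)]| = 1.
Proof. by move=> P Q; rewrite !inE; exact: hO. Qed.

Arguments hO' : clear implicits.
Lemma tinj P : injective (T P).
Proof. by move=> u v e; have := congr1 (tagged_as (Tagged AP u)) e; rewrite !tagged_asE. Qed.

Lemma memHl P y l r : (T P y \in Hl l r) = pinc P l && (y \in beta P l (O l r P)).
Proof. by rewrite inE. Qed.

Lemma beta_cls P l a : pinc P l -> beta P l a \in AL P.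
Proof. by move=> Pl; case: (class_of (hA P) (hpi1 P l Pl) (hb2 P l a Pl)). Qed.

Lemma beta_card P l a : pinc P l -> #|beta P l a| = m.
Proof. by move=> Pl; apply: (line_card (hA P)); exact: beta_cls. Qed.

Lemma beta_cover P l y : pinc P l -> exists a, y \in beta P l a.
Proof.
move=> Pl; have [M MS yM] := class_cover (hA P) y (hpi1 P l Pl).
by have [a ea] := hb3 P l M Pl MS; exists a; rewrite ea.
Qed.

Lemma beta_uniq P l a b y : pinc P l -> y \in beta P l a -> y \in beta P l b -> a = b.
Proof.
move=> Pl ya yb; apply: (hb1 P l Pl).
exact: (class_disj (hA P) (hpi1 P l Pl) (hb2 P l a Pl) (hb2 P l b Pl) ya yb).
Qed.

Lemma fiber P l r : pinc P l ->
  [set x in Hl l r | tag x == P] = T P @: beta P l (O l r P).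
Proof.
move=> Pl; apply/setP => -[Q y]; rewrite inE /=; apply/andP/imsetP.
  rewrite memHl => -[/andP[_ yB] /eqP QP]; subst Q.
  by exists y.
case=> y' yB e; have eQ : Q = P by move: (congr1 tag e).
subst Q; have ey := tinj e; subst y'.
by rewrite memHl Pl yB.
Qed.

Lemma fiber0 P l r : ~~ pinc P l -> [set x in Hl l r | tag x == P] = set0.
Proof.
move=> Pl; apply/setP => -[Q y]; rewrite !inE /=.
by apply/negP => /andP[/andP[Ql _] /eqP QP]; subst Q; rewrite Ql in Pl.
Qed.

Lemma Hl_card l r : #|Hl l r| = m * m.+1.
Proof.
rewrite (card_fib _ tag).
rewrite (eq_bigr (fun P => if pinc P l then m else 0)); last first.
  move=> P _; case: (boolP (pinc P l)) => Pl.
    by rewrite fiber // card_imset ?beta_card //; exact: tinj.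
  by rewrite fiber0 // cards0.
by rewrite -big_mkcond sum_nat_cond_const -/(C l) hC mulnC.
Qed.

Lemma C_oth l P : exists2 Q, pinc Q l & Q != P.
Proof.
have [Q] := C_other hm0 (hC l) P; rewrite inE => Ql QP; by exists Q.
Qed.

Lemma oex l P Q a b : pinc P l -> pinc Q l -> P != Q ->
  exists r, O l r P = a /\ O l r Q = b.
Proof. by move=> Pl Ql PQ; apply: (oa_exists (hO' l)); rewrite ?inE. Qed.

Lemma ocol l P a : pinc P l -> #|[set r | O l r P == a]| = m.
Proof. by move=> Pl; apply: (oa_col hm0 (hS l) (hC l) (hO' l)); rewrite inE. Qed.

Lemma ouniq l r s P Q : pinc P l -> pinc Q l -> P != Q ->
  O l r P = O l s P -> O l r Q = O l s Q -> r = s.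
Proof. by move=> Pl Ql PQ; apply: (oa_uniq (hO' l)); rewrite ?inE. Qed.

Lemma omeet l r s : exists2 P, pinc P l & O l r P = O l s P.
Proof.
have [P] := oa_meet hm0 (hS l) (hC l) hR (hO' l) r s.
by rewrite inE => Pl e; exists P.
Qed.

Lemma row_ex l P a : pinc P l -> exists r, O l r P = a.
Proof.
move=> Pl; have := ocol a Pl; move=> h.
have : 0 < #|[set r | O l r P == a]| by rewrite h hm0.
by case/card_gt0P => r; rewrite inE => /eqP e; exists r.
Qed.

Lemma beta_n0 P l a : pinc P l -> exists y, y \in beta P l a.
Proof. by move=> Pl; apply/card_gt0P; rewrite beta_card // hm0. Qed.

Lemma Hl_inj_l l l' r r' : Hl l r = Hl l' r' -> l = l'.
Proof.
move=> e; apply/eqP/negPn/negP => ll.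
case: hP => [[_ h2 _] _ _].
have := h2 l l' ll.
suff -> : [set P | pinc P l && pinc P l'] = C l by rewrite hC => -[em]; move: hm; rewrite em.
apply/setP => P; rewrite !inE; case Pl: (pinc P l) => //=.
have [y yB] := beta_n0 (O l r P) Pl.
have : T P y \in Hl l r by rewrite memHl Pl.
by rewrite e memHl => /andP[].
Qed.

Lemma Hl_inj_r l : injective (Hl l).
Proof.
move=> r r' e.
have [P Pl] : exists P, pinc P l.
  have : 0 < #|C l| by rewrite hC.
  by case/card_gt0P => P; rewrite inE => Pl; exists P.
have [Q Ql QP] := C_oth l P.
have agree : forall R, pinc R l -> O l r R = O l r' R.
  move=> R Rl; have [y yB] := beta_n0 (O l r R) Rl.
  have : T R y \in Hl l r by rewrite memHl Rl.
  rewrite e memHl => /andP[_ yB'].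
  exact: beta_uniq Rl yB yB'.
apply: (ouniq Pl Ql) => //; [by rewrite eq_sym | exact: agree | exact: agree].
Qed.

Lemma HL_cases g : g \in HL -> exists l r, g = Hl l r.
Proof. by case/imsetP => -[l r] _ ->; exists l, r. Qed.

Lemma Hl_in l r : Hl l r \in HL.
Proof. by apply/imsetP; exists (l, r). Qed.

Lemma common_diff P Q (u : AP P) (v : AP Q) : P != Q ->
  #|[set g in HL | (T P u \in g) && (T Q v \in g)]| = 1.
Proof.
move=> PQ; case: hP => [[h1 _ _] _ _].
have /eqP/cards1P[l0 hl0] := h1 P Q PQ.
have : l0 \in [set l | pinc P l && pinc Q l] by rewrite hl0 inE.
rewrite inE => /andP[Pl0 Ql0].
have [a ua] := beta_cover u Pl0.
have [b vb] := beta_cover v Ql0.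
have [r0 [e1 e2]] := oex a b Pl0 Ql0 PQ.
apply/eqP/cards1P; exists (Hl l0 r0); apply/setP => g; rewrite !inE.
apply/idP/eqP => [/andP[/HL_cases[l [r ->]] /andP[]]|->].
  rewrite !memHl => /andP[Pl ub] /andP[Ql vb'].
  have : l \in [set l | pinc P l && pinc Q l] by rewrite inE Pl Ql.
  rewrite hl0 inE => /eqP el; subst l.
  have ea := beta_uniq Pl ub ua; have eb := beta_uniq Ql vb' vb.
  by congr Hl; apply: (ouniq Pl Ql PQ); rewrite ?ea ?eb.
by rewrite Hl_in !memHl Pl0 Ql0 e1 e2 ua vb.
Qed.

Lemma common_same P (u v : AP P) : u != v ->
  1 < #|[set g in HL | (T P u \in g) && (T P v \in g)]|.
Proof.
move=> uv.
have [L LL /andP[uL vL]] := two_pts_line (hA P) uv.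
have [l Pl el] := hpi3 P (cls (AL P) L) (cls_in LL).
have Lpi : L \in pi P l by rewrite el inE LL /par eqxx.
have [a ea] := hb3 P l L Pl Lpi.
have cnt : #|Hl l @: [set r | O l r P == a]| = m.
  by rewrite card_imset ?ocol //; exact: Hl_inj_r.
apply: (leq_trans hm); apply: (leq_trans (eq_leq (esym cnt))).
apply: subset_leq_card; apply/subsetP => g /imsetP[r]; rewrite inE => /eqP er ->.
by rewrite inE Hl_in !memHl Pl er ea uL vL.
Qed.

Lemma ptnb_tag x y : pt_nb HL x y = (tag x == tag y).
Proof.
case: x => P u; case: y => Q v /=; rewrite /pt_nb.
case: (eqVneq P Q) => [e|PQ]; last first.
  have -> : (T P u == T Q v) = false.
    by apply/negP => /eqP/(congr1 tag) /= e; rewrite e eqxx in PQ.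
  by rewrite (common_diff u v PQ).
subst Q; case: (eqVneq u v) => [->|uv]; first by rewrite eqxx.
by rewrite (common_same uv) orbT.
Qed.

Lemma meet_same l r r' : 1 < #|Hl l r :&: Hl l r'|.
Proof.
have [P Pl e] := omeet l r r'.
have cnt : #|T P @: beta P l (O l r P)| = m.
  by rewrite card_imset ?beta_card //; exact: tinj.
apply: (leq_trans hm); apply: (leq_trans (eq_leq (esym cnt))).
apply: subset_leq_card; apply/subsetP => x /imsetP[y yB ->].
by rewrite inE !memHl Pl yB -e yB.
Qed.

Lemma meet_diff l l' r r' : l != l' -> exists z, Hl l r :&: Hl l' r' = [set z].
Proof.
move=> ll; case: hP => [[_ h2 _] _ _].
have /eqP/cards1P[P0 hP0] := h2 l l' ll.
have : P0 \in [set P | pinc P l && pinc P l'] by rewrite hP0 inE.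
rewrite inE => /andP[Pl Pl'].
have ne : pi P0 l != pi P0 l'.
  by apply/negP => /eqP e; rewrite (hpi2 P0 l l' Pl Pl' e) eqxx in ll.
have [z0 hz] := class_meet1 (hA P0) (hpi1 P0 l Pl) (hpi1 P0 l' Pl') ne
   (hb2 P0 l (O l r P0) Pl) (hb2 P0 l' (O l' r' P0) Pl').
exists (T P0 z0); apply/setP => -[Q w]; rewrite in_setI !memHl in_set1.
apply/idP/eqP.
  case/andP => /andP[Ql w1] /andP[Ql' w2].
  have : Q \in [set P | pinc P l && pinc P l'] by rewrite inE Ql Ql'.
  rewrite hP0 inE => /eqP eQ; subst Q.
  have : w \in beta P0 l (O l r P0) :&: beta P0 l' (O l' r' P0) by rewrite inE w1 w2.
  by rewrite hz inE => /eqP->.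
move=> e; have eQ : Q = P0 by move: (congr1 tag e).
subst Q; have ew := tinj e; subst w.
have : z0 \in [set z0] by rewrite inE.
by rewrite -hz inE => /andP[-> ->]; rewrite Pl Pl'.
Qed.

Lemma lnnb_Hl l l' r r' : ln_nb (Hl l r) (Hl l' r') = (l == l').
Proof.
rewrite /ln_nb; case: (eqVneq l l') => [<-|ll].
  by rewrite meet_same orbT.
have [z ->] := meet_diff r r' ll; rewrite cards1 /= orbF.
by apply/negP => /eqP/Hl_inj_l e; rewrite e eqxx in ll.
Qed.

Definition phil (l0 : Ln) (g : {set X}) : Ln :=
  if [pick lr : Ln * 'I_(m ^ 2) | g == Hl lr.1 lr.2] is Some lr then lr.1 else l0.

Lemma phil_Hl l0 l r : phil l0 (Hl l r) = l.
Proof.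
rewrite /phil; case: pickP => [[l' r'] /= /eqP e | H]; first by rewrite (Hl_inj_l e).
by have := H (l, r); rewrite /= eqxx.
Qed.

Lemma pH (l0 : Ln) : proj_hjelmslev HL.
Proof.
split.
- move=> [P u] [Q v]; case: (eqVneq P Q) => [e|PQ]; last first.
    have : 0 < #|[set g in HL | (T P u \in g) && (T Q v \in g)]|.
      by rewrite common_diff.
    by case/card_gt0P => g; rewrite inE => /andP[gH hg]; exists g.
  subst Q; case: (eqVneq u v) => [<-|uv].
    have [w wu] := other_pt (hA P) hm u.
    have : 0 < #|[set g in HL | (T P u \in g) && (T P w \in g)]|.
      by apply: ltnW; apply: common_same; rewrite eq_sym.
    by case/card_gt0P => g; rewrite inE => /andP[gH /andP[hg _]]; exists g; rewrite ?hg.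
  have : 0 < #|[set g in HL | (T P u \in g) && (T P v \in g)]|.
    by apply: ltnW; apply: common_same.
  by case/card_gt0P => g; rewrite inE => /andP[gH hg]; exists g.
- move=> g h /HL_cases[l [r ->]] /HL_cases[l' [r' ->]].
  case: (eqVneq l l') => [<-|ll].
    have : 0 < #|Hl l r :&: Hl l r'| by apply: ltnW; exact: meet_same.
    by case/card_gt0P => z zi; exists z.
  have [z hz] := meet_diff r r' ll.
  by exists z; rewrite hz inE.
- exists Pt, Ln, pinc, tag, (phil l0); split; first by case: hP.
  split.
  + move=> [P u] g /HL_cases[l [r ->]]; rewrite memHl phil_Hl /=.
    by case/andP.
  + move=> t; have : 0 < #|AP t|.
      by case: (hA t) => _ -> _; rewrite expn_gt0 hm0.
    by case/card_gt0P => u _; exists (T t u).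
  + move=> u; have r0 : 'I_(m ^ 2) by apply: (@Ordinal _ 0); rewrite expn_gt0 hm0.
    by exists (Hl u r0); [exact: Hl_in | exact: phil_Hl].
  + by move=> x y; rewrite ptnb_tag; split => [->|/eqP].
  + move=> g h /HL_cases[l [r ->]] /HL_cases[l' [r' ->]].
    by rewrite !phil_Hl lnnb_Hl; split => [->|/eqP].
Qed.

Lemma tPH (l0 : Ln) : tr_PH_plane m m HL.
Proof.
split; first exact: pH l0.
  by move=> g /HL_cases[l [r ->]]; exact: Hl_card.
move=> g [P u] /HL_cases[l [r ->]]; rewrite memHl => /andP[Pl _].
rewrite (eq_card (B := [set x in Hl l r | tag x == P])); last first.
  by move=> y; rewrite !inE ptnb_tag eq_sym.
by rewrite fiber // card_imset ?beta_card //; exact: tinj.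
Qed.

Lemma memN P y : (y \in T P @: [set: AP P]) = (tag y == P).
Proof.
case: y => Q v /=; apply/imsetP/eqP => [[v' _ e]|e]; first by move: (congr1 tag e).
by subst Q; exists v.
Qed.

Lemma nbhdE P u : nbhd HL (T P u) = T P @: [set: AP P].
Proof. by apply/setP => y; rewrite memN inE ptnb_tag eq_sym. Qed.

Lemma HlN P l r : Hl l r :&: T P @: [set: AP P] =
  if pinc P l then T P @: beta P l (O l r P) else set0.
Proof.
case: ifP => Pl; first by rewrite -fiber //; apply/setP => y; rewrite !inE memN.
rewrite -(fiber0 r (negbT Pl)); apply/setP => y; by rewrite !inE memN.
Qed.

Lemma imset_n0 P (L : {set AP P}) : L \in AL P -> T P @: L != set0.
Proof.
move=> LL; have [y yL] := line_n0 (hA P) hm LL.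
by apply/set0Pn; exists (T P y); exact: imset_f.
Qed.

Lemma linesE P u : nbhd_lines HL (T P u) = [set T P @: (L : {set AP P}) | L in AL P].
Proof.
rewrite /nbhd_lines nbhdE; apply/setP => b; apply/imsetP/imsetP.
  case=> g; rewrite inE => /andP[/HL_cases[l [r ->]]]; rewrite HlN.
  case: ifP => Pl; last by rewrite eqxx.
  by move=> _ ->; exists (beta P l (O l r P)) => //; exact: beta_cls.
case=> L LL ->.
have [l Pl el] := hpi3 P (cls (AL P) L) (cls_in LL).
have Lpi : L \in pi P l by rewrite el inE LL /par eqxx.
have [a ea] := hb3 P l L Pl Lpi.
have [r er] := row_ex a Pl.
exists (Hl l r); last by rewrite HlN Pl er ea.
by rewrite inE Hl_in HlN Pl er ea imset_n0.
Qed.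

Lemma unif P u : aff_plane (nbhd HL (T P u)) (nbhd_lines HL (T P u)) /\
    exists k, forall b, b \in nbhd_lines HL (T P u) ->
      #|[set g in HL | g :&: nbhd HL (T P u) == b]| = k.
Proof.
split.
  rewrite linesE nbhdE; apply: aff_transfer; first exact: tinj.
  by case: (hA P).
exists m => b; rewrite linesE nbhdE => /imsetP[L LL ->].
have [l Pl el] := hpi3 P (cls (AL P) L) (cls_in LL).
have Lpi : L \in pi P l by rewrite el inE LL /par eqxx.
have [a ea] := hb3 P l L Pl Lpi.
apply: (@eq_trans _ _ #|Hl l @: [set r | O l r P == a]|); last first.
  by rewrite card_imset ?ocol //; exact: Hl_inj_r.
apply: eq_card => g.
rewrite inE; apply/andP/imsetP.
  case=> /HL_cases[l' [r' ->]]; rewrite HlN; case: ifP => Pl'; last first.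
    by move=> /eqP e; move: (imset_n0 LL); rewrite -e eqxx.
  move=> /eqP /(imset_inj (@tinj P)) e.
  have L1 : L \in pi P l' by rewrite -e; exact: hb2.
  have epi := class_eq (hA P) (hpi1 P l' Pl') (hpi1 P l Pl) L1 Lpi.
  have el' := hpi2 P l' l Pl' Pl epi; subst l'.
  exists r' => //; rewrite inE; apply/eqP; apply: (hb1 P l Pl); by rewrite e ea.
case=> r; rewrite inE => /eqP er ->.
by rewrite Hl_in HlN Pl er ea.
Qed.

End Main.

Theorem mainTheorem1 (m : nat) (Pt Ln : finType) (pinc : Pt -> Ln -> bool)
  (AP : Pt -> finType) (AL : forall P : Pt, {set {set AP P}})
  (Sym : Ln -> finType) (O : forall l : Ln, 'I_(m ^ 2) -> Pt -> Sym l)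
  (pi : forall P : Pt, Ln -> {set {set AP P}})
  (beta : forall (P : Pt) (l : Ln), Sym l -> {set AP P}) :
  1 < m ->
  proj_plane_order m pinc ->
  (forall P, aff_plane_order m (AL P)) ->
  (forall l, #|Sym l| = m) ->
  (* O l is an OA(2,m+1,m) on Sym l, columns labelled by the points of l *)
  (forall l P Q, pinc P l -> pinc Q l -> P != Q -> forall a b : Sym l,
     #|[set r | (O l r P == a) && (O l r Q == b)]| = 1) ->
  (* pi(P,.) : lines through P -> parallel classes of A_P, bijective *)
  (forall P l, pinc P l -> pi P l \in par_classes (AL P)) ->
  (forall P l1 l2, pinc P l1 -> pinc P l2 -> pi P l1 = pi P l2 -> l1 = l2) ->
  (forall P S, S \in par_classes (AL P) -> exists2 l, pinc P l & pi P l = S) ->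
  (* beta(P,l) : Sym l -> lines of pi(P,l), bijective *)
  (forall P l, pinc P l -> injective (beta P l)) ->
  (forall P l a, pinc P l -> beta P l a \in pi P l) ->
  (forall P l L, pinc P l -> L \in pi P l -> exists a, beta P l a = L) ->
  tr_PH_plane m m (Hlines pinc O beta) /\ two_uniform_PH (Hlines pinc O beta).
Proof.
move=> hm hP hA hS hO hpi1 hpi2 hpi3 hb1 hb2 hb3.
have [l0 _] : exists l0 : Ln, true.
  case: (hP) => [[_ _ [P1 _]] _ hPl].
  have : 0 < #|[set l | pinc P1 l]| by rewrite hPl.
  by case/card_gt0P => l _; exists l.
split; first exact: (tPH hm hP hA hS hO hpi1 hpi2 hpi3 hb1 hb2 hb3 l0).
split; first exact: (pH hm hP hA hS hO hpi1 hpi2 hpi3 hb1 hb2 hb3 l0).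
by move=> -[P u]; exact: (unif hm hP hA hS hO hpi1 hpi2 hpi3 hb1 hb2 hb3 u).
Qed.
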